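(* Let $1\gg p\gg q\gg\mu\gg n^{-1}$. Let $G$ be a graph with $n$ vertices and $e(G)\ge pn^2$. Then $G$ has a $q$-cut-dense subgraph of order $\mu n$.
   Context: A graph $F$ is $q$-cut-dense if for every partition $V(F)=A\cup B$ into disjoint sets, the number of edges of $F$ between $A$ and $B$ is at least $q|A||B|$. The hierarchy means: $p$ is sufficiently small; given $p$, $q$ is sufficiently small; given $q$, $\mu$ is sufficiently small; given $\mu$, $n$ is sufficiently large. *)

(* Defs.v *)
From mathcomp Require Import all_boot all_order all_algebra.
From mathcomp Require Import reals.
Set Implicit Arguments. Unset Strict Implicit. Unset Printing Implicit Defensive.
Import Order.TTheory GRing.Theory Num.Theory.
Local Open Scope ring_scope.

(* A simple graph is a symmetric irreflexive relation G on a finite vertex type T. *)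

Definition edges (T : finType) (G : rel T) : {set {set T}} :=
  [set E : {set T} | [exists x, [exists y, [&& x != y, G x y & E == [set x; y]]]]].

Definition is_subgraph (T : finType) (G : rel T) (S : {set T}) (F : rel T) : Prop :=
  [/\ forall x y, F x y -> G x y,
      forall x y, F x y -> (x \in S) && (y \in S)
    & symmetric F].

Definition cut_edges (T : finType) (F : rel T) (A B : {set T}) : nat :=
  #|[set p : T * T | [&& p.1 \in A, p.2 \in B & F p.1 p.2]]|.

Definition cut_dense (R : realType) (q : R) (T : finType) (S : {set T}) (F : rel T) : Prop :=
  forall A B : {set T}, [disjoint A & B] -> A :|: B = S ->
    q * (#|A|%:R) * (#|B|%:R) <= (cut_edges F A B)%:R.

(* Main.v *)
Require Import Defs.
From mathcomp Require Import all_boot all_order all_algebra.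
From mathcomp Require Import reals.
From mathcomp Require Import zify ring lra.
Import Order.TTheory GRing.Theory Num.Theory.
Set Implicit Arguments. Unset Strict Implicit.

Definition Ed (T : finType) (G : rel T) (X : {set T}) : nat :=
  \sum_(x in X) \sum_(y in X) (G x y : nat).
Definition Cd (T : finType) (G : rel T) (A B : {set T}) : nat :=
  \sum_(x in A) \sum_(y in B) (G x y : nat).

Lemma cut_edgesE (T : finType) (F : rel T) (A B : {set T}) :
  cut_edges F A B = Cd F A B.
Proof.
rewrite /cut_edges /Cd pair_big_dep /= -sum1_card.
rewrite [RHS]big_mkcond [LHS]big_mkcond /=.
apply: eq_bigr => i _; case: i => x y; rewrite inE /=.
by case: (x \in A); case: (y \in B); case: (F x y).
Qed.

Lemma setU_sum (T : finType) (A B : {set T}) (f : T -> nat) :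
  [disjoint A & B] -> \sum_(x in A :|: B) f x = \sum_(x in A) f x + \sum_(x in B) f x.
Proof.
move=> dAB; rewrite -bigU //; apply: eq_bigl => x; by rewrite !inE.
Qed.

Lemma Ed_split (T : finType) (G : rel T) (A B : {set T}) :
  symmetric G -> [disjoint A & B] ->
  Ed G (A :|: B) = Ed G A + Ed G B + 2 * Cd G A B.
Proof.
move=> sG dAB; rewrite /Ed /Cd setU_sum //.
have h x : \sum_(y in A :|: B) (G x y : nat) = \sum_(y in A) (G x y : nat) + \sum_(y in B) (G x y : nat)
  by rewrite setU_sum.
rewrite (eq_bigr _ (fun x _ => h x)) (eq_bigr _ (fun x _ => h x)).
rewrite !big_split /=.
rewrite [\sum_(i in B) \sum_(y in A) _]exchange_big /=.
have e2 : \sum_(j in A) \sum_(i in B) (G i j : nat) = \sum_(j in A) \sum_(i in B) (G j i : nat).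
  by apply: eq_bigr => x _; apply: eq_bigr => y _; rewrite sG.
rewrite e2. lia.
Qed.

Lemma Ed_le (T : finType) (G : rel T) (X : {set T}) : (Ed G X <= #|X| * #|X|)%N.
Proof.
rewrite /Ed -[X in (_ <= X * _)%N]sum1_card big_distrl /=.
apply: leq_sum => x _; rewrite mul1n -sum1_card; apply: leq_sum => y _; by case: (G x y).
Qed.

Lemma Ed0 (T : finType) (G : rel T) (X : {set T}) : #|X| = 0%N -> Ed G X = 0%N.
Proof. by move/eqP; rewrite cards_eq0 => /eqP ->; rewrite /Ed big_set0. Qed.

Lemma edges_le (T : finType) (G : rel T) : symmetric G -> irreflexive G ->
  (2 * #|edges G| <= Ed G [set: T])%N.
Proof.
move=> sG iG.
have -> : Ed G [set: T] = \sum_(p : T * T | G p.1 p.2) 1%N.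
  rewrite /Ed pair_big_dep /= big_mkcond [RHS]big_mkcond /=.
  by apply: eq_bigr => -[x y] _ /=; rewrite !inE /=; case: (G x y).
rewrite (partition_big (fun p : T * T => [set p.1; p.2]) (fun E => E \in edges G)) /=; last first.
  move=> [x y] /= Gxy; rewrite inE; apply/existsP; exists x; apply/existsP; exists y.
  apply/and3P; split => //; apply/eqP => exy; move: Gxy; rewrite exy iG //.
rewrite -sum1_card big_distrr /=.
apply: leq_sum => E; rewrite inE => /existsP [x /existsP [y /and3P [nxy Gxy /eqP EE]]].
rewrite muln1 (bigD1 (x, y)) /=; last by rewrite Gxy EE eqxx.
rewrite (bigD1 (y, x)) /=; last first.
  rewrite EE setUC eqxx andbT sG Gxy /=.
  apply/eqP => -[exy _]; by rewrite exy eqxx in nxy.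
done.
Qed.

Local Open Scope ring_scope.

Theorem lemma3p14 (R : realType) :
  exists p0 : R, 0 < p0 /\ forall p : R, 0 < p <= p0 ->
  exists q0 : R, 0 < q0 /\ forall q : R, 0 < q <= q0 ->
  exists mu0 : R, 0 < mu0 /\ forall mu : R, 0 < mu <= mu0 ->
  exists n0 : nat, forall n : nat, (n0 <= n)%N ->
  forall (T : finType) (G : rel T),
    #|T| = n -> symmetric G -> irreflexive G ->
    p * (n%:R ^+ 2) <= (#|edges G|)%:R ->
    exists (S : {set T}) (F : rel T),
      [/\ is_subgraph G S F, cut_dense q S F & mu * n%:R <= (#|S|)%:R].
Proof.
exists 1; split => // p /andP[p0 _].
exists p; split => // q /andP[q0 qp].
exists p; split => // mu /andP[mu0 mup].
exists 0%N => n _ T G cT sG iG hE.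
pose f (X : {set T}) : R := (#|X| * (#|X| + n))%:R.
pose h (X : {set T}) : R := (Ed G X)%:R / f X.
have [S _ Smax] := Order.TotalTheory.arg_maxP h (i0 := setT) (P := predT) isT.
set M := h S.
have Smax' X : h X <= M by exact: Smax.
have hM X : (Ed G X)%:R <= M * f X.
  case: (posnP #|X|) => [X0|Xpos].
    by rewrite Ed0 // /f X0 mul0n mulr0.
  have fpos : 0 < f X by rewrite ltr0n muln_gt0 Xpos addn_gt0 Xpos.
  by rewrite -ler_pdivrMr //; exact: Smax'.
have Mp : (0 < n)%N -> p <= M.
  move=> n0; apply: le_trans (Smax' setT).
  rewrite /h /f cardsT cT.
  rewrite ler_pdivlMr ?ltr0n ?muln_gt0 ?addn_gt0 ?n0 //.
  have := edges_le sG iG; rewrite -(ler_nat R) natrM => h2.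
  apply: le_trans h2; rewrite natrM natrD.
  have -> : p * (n%:R * (n%:R + n%:R)) = 2%:R * (p * n%:R ^+ 2) by rewrite mulr2n; ring.
  by rewrite ler_wpM2l.
exists S, (fun x y => [&& x \in S, y \in S & G x y]); split.
- split.
  + by move=> x y /and3P[].
  + by move=> x y /and3P[-> ->].
  + by move=> x y; rewrite sG andbCA.
- move=> A B dAB AB.
  rewrite cut_edgesE.
  have -> : Cd (fun x y => [&& x \in S, y \in S & G x y]) A B = Cd G A B.
    apply: eq_bigr => x xA; apply: eq_bigr => y yB.
    by rewrite -AB !inE xA yB orbT.
  have cAB : (#|A| + #|B| = #|S|)%N.
    by rewrite -AB -cardsUI (disjoint_setI0 dAB) cards0 addn0.
  case: (posnP #|S|) => [S0|Spos].
    have : (#|A| = 0)%N by move: cAB; rewrite S0; case: #|A|.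
    by move=> ->; rewrite mulr0 mul0r.
  have n0 : (0 < n)%N by rewrite -cT; apply: leq_trans Spos (max_card _).
  have fS : 0 < f S by rewrite ltr0n muln_gt0 Spos addn_gt0 Spos.
  have hS : (Ed G S)%:R = M * f S by rewrite /M /h divfK // gt_eqF.
  have spl := Ed_split sG dAB; rewrite AB in spl.
  have hA := hM A; have hB := hM B.
  have pM := Mp n0.
  move: hS hA hB; rewrite spl /f -cAB !natrD !natrM !natrD.
  move: (Ed G A) (Ed G B) (Cd G A B) => eA eB c.
  rewrite ?natrD ?natrM.
  have a0 : 0 <= (#|A|%:R : R) by [].
  have b0 : 0 <= (#|B|%:R : R) by [].
  move: (#|A|%:R : R) (#|B|%:R : R) (n%:R : R) a0 b0 => a b m a0 b0 e1 e2 e3.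
  have ab0 : 0 <= a * b by rewrite mulr_ge0.
  have h1 : M * (a * b) <= c%:R by nra.
  apply: le_trans h1; rewrite -mulrA ler_wpM2r //; exact: le_trans qp pM.
- case: (posnP n) => [->|n0]; first by rewrite mulr0.
  have pM := Mp n0.
  case: (posnP #|S|) => [S0|Spos].
    have : M = 0 by rewrite /M /h /f S0 mul0n invr0 mulr0.
    by move=> M0; move: pM; rewrite M0 => /(lt_le_trans p0); rewrite ltxx.
  have fS : 0 < f S by rewrite ltr0n muln_gt0 Spos addn_gt0 Spos.
  have hS : (Ed G S)%:R = M * f S by rewrite /M /h divfK // gt_eqF.
  have hle := Ed_le G S; rewrite -(ler_nat R) natrM hS /f natrM natrD in hle.
  have s0 : 0 < (#|S|%:R : R) by rewrite ltr0n.
  have m0 : 0 <= (n%:R : R) by [].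
  move: hle s0 m0; move: (#|S|%:R : R) (n%:R : R) => s m hle s0 m0.
  have k1 : p * (s * (s + m)) <= s * s.
    apply: le_trans hle; rewrite ler_wpM2r //; apply: mulr_ge0; lra.
  have k2 : p * (s + m) <= s.
    by rewrite -(ler_pM2l s0); apply: le_trans k1; rewrite mulrCA.
  have k3 : mu * m <= p * m by rewrite ler_wpM2r.
  have k4 : 0 <= p * s by apply: mulr_ge0; lra.
  lra.
Qed.
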